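(* Let $d\ge 1$ and let $(f_0, f_1, \ldots, f_{d-1})$ be a finite sequence of integers with $f_i > 0$ for all $i$. Put $f_{-1}=1$. The following conditions are equivalent: (i) there is a pure quasi-forest $\Delta$ of dimension $d-1$ with $f(\Delta) = (f_0, \ldots, f_{d-1})$; (ii) there is a pure forest $\Delta$ of dimension $d-1$ with $f(\Delta) = (f_0, \ldots, f_{d-1})$; (iii) the integers $c_0,\ldots,c_d$ defined by $\sum_{i=0}^{d} f_{i-1}(x-1)^{i} = \sum_{i=0}^{d} c_i x^i$ satisfy $\sum_{i=k}^{d} c_i > 0$ for each $1 \le k \le d$ and $c_i \le 0$ for each $1 \le i < d$; (iv) the integers $b_1,\ldots,b_d$ defined by $\sum_{i=1}^{d} f_{i-1}(x-1)^{i-1} = \sum_{i=1}^{d} b_i x^{i-1}$ satisfy $0 < b_1 \le b_2 \le \cdots \le b_d$.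
   Context: A simplicial complex $\Delta$ on $[n]=\{1,\ldots,n\}$ is a collection of subsets of $[n]$ such that $\{i\}\in\Delta$ for every $i\in[n]$ and $G\subset F\in\Delta$ implies $G\in\Delta$. If $d=\max\{|F|:F\in\Delta\}$, then $\dim\Delta=d-1$. Facets are maximal faces; $\Delta$ is pure if all facets have the same cardinality. The $f$-vector is $f(\Delta)=(f_0,\ldots,f_{d-1})$, where $f_i$ is the number of faces with $i+1$ elements. For facets $F_{i_1},\ldots,F_{i_q}$, $\langle F_{i_1},\ldots,F_{i_q}\rangle$ denotes the subcomplex of all faces contained in some $F_{i_j}$. A facet $F$ of $\Delta$ is a leaf if there is a facet $G\neq F$ (a branch of $F$) with $H\cap F\subset G\cap F$ for all facets $H\neq F$. A quasi-forest is a simplicial complex whose facets admit an ordering $F_1,\ldots,F_s$ (a leaf order) such that for each $1<j\le s$, $F_j$ is a leaf of $\langle F_1,\ldots,F_j\rangle$. A forest is a simplicial complex such that for every nonempty subset $\{F_{i_1},\ldots,F_{i_q}\}$ of its facets, $\langle F_{i_1},\ldots,F_{i_q}\rangle$ has a leaf. (A complex with a single facet is regarded as a quasi-forest and forest.) *)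

(* Defs.v *)
From mathcomp Require Import all_boot all_order all_algebra.
Set Implicit Arguments. Unset Strict Implicit. Unset Printing Implicit Defensive.
Import GRing.Theory Num.Theory.

Section Complexes.
Variable T : finType.

Definition simplicial_complex (D : {set {set T}}) : Prop :=
  (forall x : T, [set x] \in D) /\
  (forall F G : {set T}, G \subset F -> F \in D -> G \in D).

Definition facets (D : {set {set T}}) : {set {set T}} :=
  [set F in D | [forall G in D, (F \subset G) ==> (G == F)]].

(* pure of dimension d-1: every facet has exactly d elements *)
Definition pure_dim (D : {set {set T}}) (d : nat) : Prop :=
  forall F, F \in facets D -> #|F| = d.

Definition fvec (D : {set {set T}}) (i : nat) : nat :=
  #|[set F in D | #|F| == i.+1]|.

Definition is_leaf (S : {set {set T}}) (F : {set T}) : bool :=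
  (F \in S) &&
  [exists G in S, (G != F) &&
     [forall H in S, (H != F) ==> (H :&: F \subset G :&: F)]].

Definition quasi_forest (D : {set {set T}}) : Prop :=
  exists s : seq {set T},
    perm_eq s (enum (facets D)) /\
    forall j, 1 < j <= size s ->
      is_leaf [set F in take j s] (nth set0 s j.-1).

(* forest: every subcomplex generated by a nonempty set of facets has a leaf;
   a subcomplex with a single facet is regarded as a forest, so the leaf
   condition is imposed for sets of at least two facets. *)
Definition forest (D : {set {set T}}) : Prop :=
  forall S : {set {set T}}, S \subset facets D -> 1 < #|S| ->
    exists F, is_leaf S F.

End Complexes.

Local Open Scope ring_scope.

Definition fshift (f : nat -> int) (i : nat) : int :=
  if i is i'.+1 then f i' else 1.

Definition hpoly (d : nat) (f : nat -> int) : {poly int} :=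
  \sum_(i < d.+1) (fshift f i)%:P * ('X - 1) ^+ i.

Definition bpoly (d : nat) (f : nat -> int) : {poly int} :=
  \sum_(i < d) (f i)%:P * ('X - 1) ^+ i.

Definition cc (d : nat) (f : nat -> int) (i : nat) : int := (hpoly d f)`_i.
Definition bb (d : nat) (f : nat -> int) (i : nat) : int := (bpoly d f)`_i.-1.

Definition has_fvector (n : nat) (D : {set {set 'I_n}}) (d : nat)
  (f : nat -> int) : Prop :=
  forall i, (i < d)%N -> (fvec D i)%:Z = f i.

(* Main.v *)
Require Import Defs.
From mathcomp Require Import all_boot all_order all_algebra zify ring.
Import GRing.Theory Num.Theory.

Module Part1.
Import GRing.Theory Num.Theory.
Set Implicit Arguments. Unset Strict Implicit. Unset Printing Implicit Defensive.

Section Comb.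
Variable T : finType.
Implicit Types (L : seq {set T}) (F G H M A : {set T}).

Definition Ncount L k := #|[set A : {set T} | (#|A| == k) && has (fun H => A \subset H) L]|.

Fixpoint leafy (d : nat) L (ms : seq nat) : Prop :=
  match L with
  | [::] => False
  | F :: L' => #|F| = d /\
      match L' with
      | [::] => ms = [::]
      | _ :: _ => exists m ms', ms = m :: ms' /\
          (exists M, [/\ M \subset F, #|M| = m, has (fun H => M \subset H) L'
                       & all (fun H => H :&: F \subset M) L']) /\ leafy d L' ms'
      end
  end.

Lemma Ncount_cons F L M k : M \subset F -> has (fun H => M \subset H) L ->
  all (fun H => H :&: F \subset M) L ->
  Ncount (F :: L) k + 'C(#|M|, k) = Ncount L k + 'C(#|F|, k).
Proof.
move=> sMF hM aL.
rewrite /Ncount -!cards_draws.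
set X := [set A : {set T} | A \subset F & #|A| == k].
set Y := [set A : {set T} | (#|A| == k) && has (fun H => A \subset H) L].
have -> : [set A : {set T} | (#|A| == k) && has (fun H => A \subset H) (F :: L)] = X :|: Y.
  apply/setP=> A; rewrite !inE /=.
  by case: (A \subset F); case: (#|A| == k); case: has.
have -> : [set A : {set T} | A \subset M & #|A| == k] = X :&: Y.
  apply/setP=> A; rewrite !inE.
  apply/idP/idP.
    case/andP=> sAM ->; rewrite (subset_trans sAM sMF) /=.
    case/hasP: hM => H HL sMH; apply/hasP; exists H => //.
    exact: subset_trans sAM sMH.
  case/andP=> /andP [sAF ->] /andP [_ /hasP [H HL sAH]]; rewrite andbT.
  apply: subset_trans (allP aL H HL).
  by rewrite subsetI sAH sAF.
by rewrite cardsUI addnC.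
Qed.

Lemma leafy_count d L ms : leafy d L ms ->
  size L = (size ms).+1 /\
  forall k, Ncount L k + \sum_(m <- ms) 'C(m, k) = size L * 'C(d, k).
Proof.
elim: L ms => [|F L IH] ms //= [hF].
case: L IH => [|H L] IH.
  move=> ->; split=> // k; rewrite big_nil addn0 mul1n -hF -cards_draws /Ncount.
  by apply: eq_card => A; rewrite !inE /= orbF andbC.
case=> m [ms' [-> [[M [sMF cM hM aM]] hL]]].
have [sz hk] := IH _ hL.
split; first by move: sz => /= ->.
move=> k; rewrite big_cons -cM addnA (Ncount_cons k sMF hM aM) -addnA.
by rewrite addnCA hk hF mulSn addnC.
Qed.

Lemma face_in_facet (D : {set {set T}}) A :
  A \in D -> exists2 F, F \in facets D & A \subset F.
Proof.
move=> AD.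
pose P := [pred G | (G \in D) && (A \subset G)].
have PA : P A by rewrite /= AD subxx.
case: (arg_maxnP (fun G => #|G|) PA) => F /andP [FD sAF] maxF.
exists F => //.
rewrite inE FD /=; apply/forallP=> G; apply/implyP=> GD; apply/implyP=> sFG.
have : #|G| <= #|F| by apply: maxF; rewrite /= GD (subset_trans sAF sFG).
by move=> le; rewrite eq_sym eqEcard sFG le.
Qed.

Lemma facets_sub (D : {set {set T}}) : facets D \subset D.
Proof. by apply/subsetP=> F; rewrite inE => /andP []. Qed.

Lemma faces_facets (D : {set {set T}}) A :
  (forall F G : {set T}, G \subset F -> F \in D -> G \in D) ->
  (A \in D) = [exists F in facets D, A \subset F].
Proof.
move=> dc; apply/idP/idP.
  by case/face_in_facet=> F FD sAF; apply/existsP; exists F; rewrite FD.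
case/existsP=> F /andP [FD sAF]; apply: dc sAF _.
exact: (subsetP (facets_sub D)).
Qed.

Lemma is_leaf_eq S1 S2 F : S1 = S2 -> is_leaf S1 F = is_leaf S2 F.
Proof. by move=> ->. Qed.

Lemma forest_qf (S : {set {set T}}) :
  (forall S' : {set {set T}}, S' \subset S -> 1 < #|S'| -> exists F, is_leaf S' F) ->
  exists s : seq {set T}, perm_eq s (enum S) /\
    forall j, 1 < j <= size s -> is_leaf [set F in take j s] (nth set0 s j.-1).
Proof.
move: {2}#|S| (leqnn #|S|) => N; elim: N S => [|N IH] S hN hS.
  exists (enum S); split=> // j /andP [hj]; rewrite -cardE=> hh; have := leq_trans hh hN; lia.
case: (leqP #|S| 1) => h1.
  exists (enum S); split=> // j /andP [hj]; rewrite -cardE=> hh; have := leq_trans hh h1; lia.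
have [F lF] := hS S (subxx S) h1.
have FS : F \in S by case/andP: lF.
have hS' : forall S' : {set {set T}}, S' \subset S :\ F -> 1 < #|S'| -> exists F, is_leaf S' F.
  move=> S' sS' h; apply: hS h; apply: subset_trans sS' _; exact: subsetDl.
have hN' : #|S :\ F| <= N by move: hN; rewrite (cardsD1 F S) FS.
have [s [ps hs]] := IH _ hN' hS'.
have uS : uniq s by rewrite (perm_uniq ps) enum_uniq.
have Fs : F \notin s by rewrite (perm_mem ps) mem_enum !inE eqxx.
exists (rcons s F); split.
  apply: uniq_perm; first by rewrite rcons_uniq Fs uS.
    exact: enum_uniq.
  move=> G; rewrite mem_rcons in_cons (perm_mem ps) !mem_enum !inE.
  by case: eqP => // ->.
move=> j; rewrite size_rcons => /andP [h1j].
rewrite leq_eqVlt => /orP [/eqP ->|hj].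
  rewrite take_oversize ?size_rcons // nth_rcons /= ltnn eqxx.
  rewrite (is_leaf_eq _ (_ : _ = S)) //.
  apply/setP=> G; rewrite !inE mem_rcons in_cons (perm_mem ps) mem_enum !inE.
  by case: eqP => // ->.
have hj' : j <= size s by lia.
rewrite -cats1 takel_cat // nth_cat (_ : j.-1 < size s) ?hs ?h1j //; lia.
Qed.

End Comb.

End Part1.
Import Part1.

Module Part2.
Import Order.TTheory GRing.Theory Num.Theory.
Set Implicit Arguments. Unset Strict Implicit. Unset Printing Implicit Defensive.
Local Open Scope ring_scope.

Lemma hpoly_bpoly d f : hpoly d f = 1 + ('X - 1) * bpoly d f.
Proof.
rewrite /hpoly /bpoly big_ord_recl /= expr0 mulr1 mulr_sumr; congr (_ + _).
apply: eq_bigr => i _; rewrite /bump /= exprS.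
by rewrite mulrCA.
Qed.

Lemma Xsub1_sum (m d : nat) : (m <= d)%N ->
  ('X - 1) * \sum_(m <= t < d) 'X^t = 'X^d - 'X^m :> {poly int}.
Proof.
move=> hmd; rewrite mulr_sumr.
rewrite (telescope_sumr_eq (fun t => 'X^t)) //.
by move=> k _; rewrite mulrBl mul1r -exprS.
Qed.

Lemma binom_X (t d : nat) : (t <= d)%N ->
  \sum_(k < d.+1) ('X - 1) ^+ k *+ 'C(t, k) = 'X^t :> {poly int}.
Proof.
move=> htd.
have -> : d.+1 = (t.+1 + (d - t))%N by lia.
rewrite big_split_ord /= -[in RHS](subrK 1 'X) exprD1n.
rewrite [X in _ + X]big1 ?addr0 // => i _.
by rewrite bin_small ?mulr0n //= ltnS leq_addr.
Qed.

Lemma hpoly_of_counts d f (N : nat -> nat) (ms : seq nat) (s : nat) :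
  (forall k, (k <= d)%N -> fshift f k = (N k)%:R) ->
  (forall k, N k + \sum_(m <- ms) 'C(m, k) = s * 'C(d, k))%N ->
  all (fun m => m <= d)%N ms ->
  hpoly d f = 'X^d *+ s - \sum_(m <- ms) 'X^m.
Proof.
move=> hN hc hms.
have e : forall k, (k <= d)%N ->
   fshift f k = (s * 'C(d, k))%:R - \sum_(m <- ms) ('C(m, k))%:R.
  move=> k hk; rewrite hN // -hc natrD -natr_sum addrK //.
rewrite /hpoly.
under eq_bigr => k _ do rewrite e ?leq_ord // mul_polyC scalerBl scaler_suml.
rewrite sumrB; congr (_ - _).
  rewrite -(binom_X (leqnn d)) -sumrMnl; apply: eq_bigr => k _.
  by rewrite scaler_nat -mulrnA mulnC.
rewrite exchange_big /=; apply: eq_big_seq => m mms.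
rewrite -(binom_X (allP hms m mms)); apply: eq_bigr => k _.
by rewrite scaler_nat.
Qed.

Lemma sum_const_seq (ms : seq nat) (x : {poly int}) : \sum_(m <- ms) x = x *+ size ms.
Proof. by elim: ms => [|m ms IH]; rewrite ?big_nil ?big_cons ?IH ?mulrS. Qed.

Definition Bm (d : nat) (ms : seq nat) : {poly int} :=
  \sum_(m <- 0%N :: ms) \sum_(m <= t < d) 'X^t.

Lemma bpoly_Bm d f (ms : seq nat) :
  hpoly d f = 'X^d *+ (size ms).+1 - \sum_(m <- ms) 'X^m ->
  all (fun m => m <= d)%N ms -> bpoly d f = Bm d ms.
Proof.
move=> hh hms.
have nz : ('X - 1 : {poly int}) != 0 by rewrite -polyC1 polyXsubC_eq0.
apply: (mulfI nz).
apply: (addrI 1); rewrite -hpoly_bpoly hh /Bm big_cons mulrDr.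
rewrite Xsub1_sum // expr0 mulr_sumr.
have -> : \sum_(m <- ms) ('X - 1) * \sum_(m <= t < d) 'X^t = \sum_(m <- ms) ('X^d - 'X^m) :> {poly int}.
  by apply: eq_big_seq => m mms; rewrite Xsub1_sum ?(allP hms m mms).
rewrite sumrB sum_const_seq mulrSr.
ring.
Qed.

Lemma sum_ind_nat (m d t : nat) :
  \sum_(m <= u < d) ((t == u)%:R : int) = ((m <= t) && (t < d))%N%:R.
Proof.
elim: d => [|d IH]; first by rewrite big_geq // ltn0 andbF.
case: (leqP m d) => hmd.
  rewrite big_nat_recr //= IH.
  case: (ltngtP t d) => h.
  - by rewrite (_ : (t < d.+1)%N) ?andbT ?addr0 //; lia.
  - by rewrite !andbF addr0 (_ : (t < d.+1)%N = false) //; lia.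
  - by rewrite h andbF add0r ltnSn hmd.
rewrite big_geq //.
have -> : ((m <= t) && (t < d.+1))%N = false by apply/negbTE; lia.
by [].
Qed.

Lemma coef_Bm d ms t :
  (Bm d ms)`_t = if (t < d)%N then (count (fun m => m <= t)%N (0%N :: ms))%:R else 0.
Proof.
rewrite /Bm coef_sum.
under eq_bigr => m _ do rewrite coef_sum.
under eq_bigr => m _ do under eq_bigr => u _ do rewrite coefXn.
under eq_bigr => m _ do rewrite sum_ind_nat.
case: ifP => htd.
  rewrite -sum1_count natr_sum [RHS]big_mkcond /=; apply: eq_bigr => m _.
  by rewrite andbT; case: (m <= t)%N.
by rewrite big1 // => m _; rewrite andbF.
Qed.

Lemma bpoly_inj d f g : bpoly d f = bpoly d g -> forall i, (i < d)%N -> f i = g i.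
Proof.
have E : forall h, bpoly d h \Po ('X + 1) = \poly_(i < d) h i.
  move=> h; rewrite /bpoly poly_def rmorph_sum /=; apply: eq_bigr => i _.
  by rewrite rmorphM rmorphXn /= comp_polyC comp_polyB comp_polyX rmorph1 addrK mul_polyC.
move=> e i hi.
have := congr1 (fun p => (p \Po ('X + 1))`_i) e.
by rewrite /= !E !coef_poly hi.
Qed.

Lemma bpoly_coef_high d f t : (d <= t)%N -> (bpoly d f)`_t = 0.
Proof.
move=> hdt; rewrite /bpoly coef_sum big1 // => i _.
rewrite coefCM -polyC1 nth_default ?mulr0 // size_exp_XsubC.
by have := ltn_ord i; lia.
Qed.

Lemma cc_bb d f i : (1 <= i)%N -> cc d f i = bb d f i - bb d f i.+1.
Proof.
move=> hi; rewrite /cc /bb hpoly_bpoly coefD coef1 mulrBl mul1r coefB coefXM.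
by case: i hi => // i _ /=; rewrite add0r.
Qed.

Lemma sum_cc d f k : (1 <= k <= d.+1)%N ->
  \sum_(k <= i < d.+1) cc d f i = bb d f k.
Proof.
case/andP=> h1 h2.
rewrite (telescope_sumr_eq (fun i => - bb d f i)) //.
  by rewrite /bb /= bpoly_coef_high // oppr0 add0r opprK.
move=> j /andP [hj _]; rewrite cc_bb; last by lia.
by rewrite opprK addrC.
Qed.

Lemma iii_iv d f : (1 <= d)%N ->
  ((forall k, (1 <= k <= d)%N -> 0 < \sum_(k <= i < d.+1) cc d f i) /\
    (forall i, (1 <= i < d)%N -> cc d f i <= 0)) <->
  (0 < bb d f 1 /\ forall i, (1 <= i < d)%N -> bb d f i <= bb d f i.+1).
Proof.
move=> hd; split.
  case=> h1 h2; split.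
    by rewrite -sum_cc ?h1 //; lia.
  move=> i hi; have := h2 i hi; rewrite cc_bb; last by lia.
  by rewrite subr_le0.
case=> h1 h2.
have pos : forall k, (1 <= k <= d)%N -> 0 < bb d f k.
  elim=> [|k IH] //; case: k IH => [|k] IH // hk.
  apply: lt_le_trans (h2 k.+1 _); last by lia.
  by apply: IH; lia.
split.
  by move=> k hk; rewrite sum_cc ?pos //; lia.
by move=> i hi; rewrite cc_bb ?subr_le0 ?h2 //; lia.
Qed.

End Part2.
Import Part2.

Module Part3.
Import Order.TTheory GRing.Theory Num.Theory.
Set Implicit Arguments. Unset Strict Implicit. Unset Printing Implicit Defensive.

Section QF.
Variable T : finType.

Lemma qf_leafy d (D : {set {set T}}) (s : seq {set T}) :
  pure_dim D d -> perm_eq s (enum (facets D)) ->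
  (forall j, 1 < j <= size s -> is_leaf [set F in take j s] (nth set0 s j.-1)) ->
  forall j, 0 < j <= size s ->
    exists ms, leafy d (rev (take j s)) ms /\ all (fun m => m < d) ms.
Proof.
move=> pd ps hl.
have cs : forall F, F \in s -> #|F| = d.
  by move=> F; rewrite (perm_mem ps) mem_enum => /pd.
have us : uniq s by rewrite (perm_uniq ps) enum_uniq.
elim=> [|j IH] //; case/andP=> _ hj.
case: j IH hj => [|j] IH hj.
  exists [::]; split=> //.
  rewrite (take_nth set0) // take0 rev_rcons /=; split=> //.
  by apply: cs; rewrite mem_nth.
have [ms [hms ams]] : exists ms, leafy d (rev (take j.+1 s)) ms /\ all (fun m => m < d) ms.
  by apply: IH; lia.
set F := nth set0 s j.+1.
have eT : take j.+2 s = rcons (take j.+1 s) F by rewrite (take_nth set0).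
have Fn : F \notin take j.+1 s.
  by have := take_uniq j.+2 us; rewrite eT rcons_uniq => /andP [].
have := hl j.+2; rewrite hj /= => /(_ isT).
case/andP=> _ /existsP [G /and3P [GS GF /forallP hH]].
have Gt : G \in take j.+1 s.
  by move: GS; rewrite inE eT mem_rcons in_cons (negbTE GF).
set M := G :&: F.
have cG : #|G| = d by apply: cs; apply: mem_take Gt.
have cF : #|F| = d by apply: cs; rewrite mem_nth.
have mlt : #|M| < d.
  rewrite ltnNge; apply/negP=> hM.
  have : M == F by rewrite eqEcard subsetIr cF.
  move/eqP=> eMF.
  have : G == F.
    by rewrite eq_sym eqEcard cF cG leqnn andbT -eMF subsetIl.
  by rewrite (negbTE GF).
exists (#|M| :: ms); split; last by rewrite /= mlt.
rewrite eT rev_rcons /=; split=> //.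
case E: (rev (take j.+1 s)) hms => [|H L] hms //.
exists #|M|, ms; split=> //; split=> //.
exists M; split=> //.
- exact: subsetIr.
- by rewrite -E; apply/hasP; exists G; rewrite ?mem_rev ?subsetIl.
- rewrite -E; apply/allP=> H' H't; rewrite mem_rev in H't.
  have := hH H'; rewrite inE eT mem_rcons in_cons H't orbT /=.
  have -> : H' != F by apply: contraNneq Fn => <-.
  by [].
Qed.

Lemma pipeline d (D : {set {set T}}) (L : seq {set T}) ms (f : nat -> int) :
  (forall A, (A \in D) = has (fun H : {set _} => A \subset H) L) -> leafy d L ms ->
  all (fun m => m < d) ms ->
  (forall i, i < d -> f i = Posz (fvec D i)) -> bpoly d f = Bm d ms.
Proof.
move=> hD hl ams hf.
have [sz hc] := leafy_count hl.
have ams' : all (fun m => m <= d) ms.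
  by apply/allP=> m /(allP ams) /ltnW.
apply: bpoly_Bm => //.
rewrite -sz; apply: (hpoly_of_counts (N := Ncount L)) => //.
case=> [|k] hk /=.
  have := hc 0; rewrite bin0 muln1 (eq_bigr (fun _ => 1)) ?sum1_size; last by move=> m _; rewrite bin0.
  by rewrite sz => e; rewrite (_ : Ncount L 0 = 1) //; lia.
rewrite hf // natz /fvec /Ncount; congr Posz.
by apply: eq_card => A; rewrite !inE hD andbC.
Qed.

End QF.

Local Open Scope ring_scope.

Lemma i_iv d (f : nat -> int) : (1 <= d)%N -> (forall i, (i < d)%N -> 0 < f i) ->
   (exists (n : nat) (D : {set {set 'I_n}}),
      simplicial_complex D /\ pure_dim D d /\ quasi_forest D /\
      has_fvector D d f) ->
   (0 < bb d f 1 /\ forall i, (1 <= i < d)%N -> bb d f i <= bb d f i.+1).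
Proof.
move=> hd fpos [n [D [[hsing hdc] [pd [[s [ps hl]] hf]]]]].
have memD : forall A, (A \in D) = has (fun H : {set _} => A \subset H) (rev s).
  move=> A; rewrite (faces_facets A hdc) has_rev.
  apply/existsP/hasP.
    by case=> F /andP [FD sAF]; exists F; rewrite ?(perm_mem ps) ?mem_enum.
  by case=> F Fs sAF; exists F; rewrite -mem_enum -(perm_mem ps) Fs.
have s0 : (0 < size s)%N.
  have := fpos 0%N hd; rewrite -hf // /fvec ltz_nat card_gt0 => /set0Pn [A].
  rewrite inE => /andP [AD _]; move: AD; rewrite memD has_rev.
  by case: (s).
have [ms [hms ams]] := qf_leafy pd ps hl (j := size s) (introT andP (conj s0 (leqnn _))).
rewrite take_size in hms.
have hb := pipeline memD hms ams (fun i hi => esym (hf i hi)).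
rewrite /bb hb !coef_Bm /= hd; split.
  by rewrite ltr0n.
move=> i /andP [h1 h2]; rewrite !coef_Bm h2.
rewrite (_ : (i.-1 < d)%N); last by lia.
rewrite ler_nat /= leq_add2l.
apply: sub_count => m /=; lia.
Qed.

End Part3.
Import Part3.

Module Part4.
Import Order.TTheory GRing.Theory Num.Theory.
Set Implicit Arguments. Unset Strict Implicit. Unset Printing Implicit Defensive.

Lemma ms_of_b d (b : nat -> int) : (0 < b 1)%R ->
  (forall i, 1 <= i < d -> (b i <= b i.+1)%R) ->
  exists ms : seq nat, all (fun m => m < d) ms /\
    forall t, t < d -> b t.+1 = ((count (fun m => (m <= t)%N) (0 :: ms))%:R)%R.
Proof.
move=> h1 hm.
pose b' t := if t is 0 then 1%R else b t.
pose c t := `|(b' t.+1 - b' t)%R|%N.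
have cE : forall t, t < d -> Posz (c t) = (b' t.+1 - b' t)%R.
  move=> t ht; rewrite /c gez0_abs // subr_ge0.
  case: t ht => [|t] ht /=; first by move: h1; rewrite -gtz0_ge1.
  by apply: hm; lia.
exists (flatten [seq nseq (c t) t | t <- iota 0 d]); split.
  apply/allP=> m /flatten_mapP [t]; rewrite mem_iota mem_nseq => /andP [_ ht] /andP [_ /eqP ->].
  by [].
move=> t0 ht0.
rewrite /= count_flatten -map_comp.
rewrite (eq_map (g := fun t => (t <= t0) * c t)); last by move=> t /=; rewrite count_nseq.
rewrite sumnE big_map.
rewrite -(subn0 d) -/(index_iota 0 d) (big_cat_nat _ (n := t0.+1)) //=.
rewrite [\sum_(t0.+1 <= i < d) _]big_nat_cond [\sum_(t0.+1 <= i < d | _) _]big1; last first.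
  by move=> t /andP [/andP [h _] _]; rewrite (_ : t <= t0 = false) //; lia.
rewrite addn0 big_nat_cond (eq_bigr (fun t => c t)); last first.
  by move=> t /andP [/andP [_ h] _]; rewrite (_ : t <= t0) ?mul1n //; lia.
rewrite -big_nat_cond natrD natr_sum.
rewrite (telescope_sumr_eq b') //; last first.
  by move=> k /andP [_ hk]; rewrite natz cE //; lia.
by rewrite /= addrC subrK.
Qed.

End Part4.
Import Part4.

Module Part5.
Set Implicit Arguments. Unset Strict Implicit. Unset Printing Implicit Defensive.

Lemma sum_int n a p q : a <= p <= q ->
  \sum_(0 <= v < n) ((v < a) || (p <= v < q) : nat) = minn a n + (minn q n - minn p n).
Proof.
move=> h; elim: n => [|n IH]; first by rewrite big_geq //; lia.
rewrite big_nat_recr //= IH.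
case: (leqP a n) => h1; case: (leqP p n) => h2; case: (leqP q n) => h3; lia.
Qed.

Lemma card_int n a p q : a <= p <= q -> q <= n ->
  #|[set v : 'I_n | (v < a) || (p <= v < q)]| = a + (q - p).
Proof.
move=> h hq.
rewrite -sum1_card big_mkcond /=.
rewrite (eq_bigr (fun v : 'I_n => ((v < a) || (p <= v < q) : nat))); last first.
  by move=> v _; rewrite inE; case: ifP.
rewrite -(big_mkord xpredT (fun v => ((v < a) || (p <= v < q) : nat))) sum_int //.
lia.
Qed.

Section Gen.
Variable T : finType.

Lemma facet_in_L (L : seq {set T}) F :
  F \in facets [set A : {set T} | has (fun H : {set T} => A \subset H) L] -> F \in L.
Proof.
rewrite inE => /andP [FD /forallP mx].
move: (FD); rewrite inE => /hasP [H HL sFH].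
have HD : H \in [set A : {set T} | has (fun H : {set T} => A \subset H) L].
  by rewrite inE; apply/hasP; exists H.
by have := mx H; rewrite HD sFH /= => /eqP <-.
Qed.

Lemma chain_forest (S0 : {set {set T}}) (lev : {set T} -> nat) (P : nat -> {set T}) :
  (forall a b, a <= b -> P a \subset P b) ->
  (forall F H, F \in S0 -> H \in S0 -> F != H -> F :&: H = P (minn (lev F) (lev H))) ->
  forall S : {set {set T}}, S \subset S0 -> 1 < #|S| -> exists F, is_leaf S F.
Proof.
move=> Pm hI S sS hS.
have [F1 F1S] : exists F1, F1 \in S.
  by apply/set0Pn; rewrite -card_gt0; lia.
case: (arg_maxnP lev F1S) => F FS0 maxF.
have FS : F \in S := FS0.
have [G1 G1S] : exists G1, G1 \in S :\ F.
  by apply/set0Pn; rewrite -card_gt0; move: hS; rewrite (cardsD1 F) FS => h; exact: h.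
case: (arg_maxnP lev G1S) => G GS0 maxG.
have : G \in S :\ F := GS0; rewrite !inE => /andP [GF GS].
exists F; rewrite /is_leaf FS /=; apply/existsP; exists G; rewrite GS GF /=.
apply/forallP=> H; apply/implyP=> HS; apply/implyP=> HF.
have s0 := subsetP sS.
rewrite setIC (hI _ _ (s0 _ FS) (s0 _ HS)) 1?eq_sym //.
rewrite setIC (hI _ _ (s0 _ FS) (s0 _ GS)) 1?eq_sym //.
have hH : H \in S :\ F by rewrite !inE HF HS.
apply: Pm; have hle := maxG H hH; rewrite leq_min geq_minl /=; exact: leq_trans (geq_minr _ _) hle.
Qed.

End Gen.

Section Construction.
Variables (d : nat) (Ls : seq nat).
Hypotheses (hLs0 : nth 0 Ls 0 = d) (hLsd : all (fun m => m <= d) Ls) (hK : 0 < size Ls).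

Definition lv j := nth 0 Ls j.
Definition ww j := d - lv j.
Definition pp j := d + \sum_(0 <= k < j) ww k.
Definition NN := pp (size Ls).
Definition Fac j : {set 'I_NN} := [set v : 'I_NN | (v < lv j) || (pp j <= v < pp j + ww j)].
Definition Lst := rev (map Fac (iota 0 (size Ls))).
Definition Dc : {set {set 'I_NN}} := [set A : {set 'I_NN} | has (fun H : {set 'I_NN} => A \subset H) Lst].
Definition Pset a : {set 'I_NN} := [set v : 'I_NN | v < a].
Definition lev (F : {set 'I_NN}) := #|F :&: Fac 0|.

Lemma pp_S j : pp j.+1 = pp j + ww j.
Proof. by rewrite /pp big_nat_recr //= addnA. Qed.

Lemma pp_mono j k : j <= k -> pp j <= pp k.
Proof.
move=> hjk; rewrite /pp (big_cat_nat (leq0n j) hjk) /=.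
by rewrite addnA leq_addr.
Qed.

Lemma lv_le j : lv j <= d.
Proof.
rewrite /lv; case: (ltnP j (size Ls)) => h.
  by apply: (allP hLsd); rewrite mem_nth.
by rewrite nth_default.
Qed.

Lemma d_le_pp j : d <= pp j.
Proof. by rewrite /pp leq_addr. Qed.

Lemma ppS_le j : j < size Ls -> pp j + ww j <= NN.
Proof. by move=> h; rewrite -pp_S; apply: pp_mono. Qed.

Lemma Fac_card j : j < size Ls -> #|Fac j| = d.
Proof.
move=> hj; rewrite card_int ?ppS_le //.
  have := lv_le j; rewrite /ww; lia.
have := lv_le j; have := d_le_pp j; lia.
Qed.

Lemma Fac_int j k : j < k -> k < size Ls ->
  Fac j :&: Fac k = Pset (minn (lv j) (lv k)).
Proof.
move=> hjk hk; apply/setP=> v; rewrite !inE.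
have := pp_mono hjk; have := pp_S j; have := lv_le j; have := lv_le k.
have := d_le_pp j; have := d_le_pp k.
move=> *; apply/idP/idP; lia.
Qed.

Lemma Fac_int' j k : j != k -> j < size Ls -> k < size Ls ->
  Fac j :&: Fac k = Pset (minn (lv j) (lv k)).
Proof.
case: (ltngtP j k) => // h _ hj hk; first exact: Fac_int.
by rewrite setIC minnC; apply: Fac_int.
Qed.

Lemma d_le_N : d <= NN.
Proof. exact: d_le_pp. Qed.

Lemma card_P a : a <= NN -> #|Pset a| = a.
Proof.
move=> h; have e := @card_int NN a a a (introT andP (conj (leqnn a) (leqnn a))) h.
rewrite subnn addn0 in e; rewrite -[RHS]e.
by apply: eq_card => v; rewrite !inE; apply/idP/idP; lia.
Qed.

Lemma lev_Fac j : j < size Ls -> lev (Fac j) = lv j.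
Proof.
move=> hj; rewrite /lev; case: j hj => [|j] hj.
  by rewrite setIid Fac_card // /lv hLs0.
have h1 := lv_le j.+1; have h2 := d_le_N.
rewrite setIC Fac_int //.
have -> : minn (lv 0) (lv j.+1) = lv j.+1 by rewrite /lv hLs0; apply/minn_idPr.
apply: card_P; exact: leq_trans h1 h2.
Qed.

Lemma find_block x m : d <= x -> x < pp m -> exists2 j, j < m & pp j <= x < pp j.+1.
Proof.
move=> hx; elim: m => [|m IH] hvm.
  by move: hvm; rewrite /pp big_geq //; lia.
case: (ltnP x (pp m)) => h.
  by case: (IH h) => j hj hh; exists j => //; lia.
by exists m => //; rewrite h hvm.
Qed.

Lemma cover (v : 'I_NN) : exists2 j, j < size Ls & v \in Fac j.
Proof.
case: (ltnP v d) => hv.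
  by exists 0 => //; rewrite inE /lv hLs0 hv.
have : exists2 j, j < size Ls & pp j <= v < pp j.+1.
  by apply: find_block => //; exact: ltn_ord.
case=> j hj; rewrite pp_S => hh; exists j => //.
by rewrite inE hh orbT.
Qed.

Lemma mem_Lst H : H \in Lst -> exists2 j, j < size Ls & H = Fac j.
Proof.
by rewrite mem_rev => /mapP [j]; rewrite mem_iota => /andP [_ hj] ->; exists j.
Qed.

Lemma Fac_in j : j < size Ls -> Fac j \in Lst.
Proof. by move=> hj; rewrite mem_rev; apply: map_f; rewrite mem_iota. Qed.

Lemma Dc_simplicial : simplicial_complex Dc.
Proof.
split.
  move=> x; have [j hj xj] := cover x.
  by rewrite inE; apply/hasP; exists (Fac j); rewrite ?Fac_in ?sub1set.
move=> F G sGF; rewrite !inE => /hasP [H HL sFH]; apply/hasP; exists H => //.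
exact: subset_trans sGF sFH.
Qed.

Lemma Dc_pure : pure_dim Dc d.
Proof.
move=> F /facet_in_L /mem_Lst [j hj ->]; exact: Fac_card.
Qed.

Lemma Dc_forest : forest Dc.
Proof.
move=> S sS hS.
apply: (chain_forest (S0 := facets Dc) (lev := lev) (P := Pset)) sS hS.
  by move=> a b hab; apply/subsetP=> v; rewrite !inE => h; lia.
move=> F H /facet_in_L /mem_Lst [j hj ->] /facet_in_L /mem_Lst [k hk ->] hne.
rewrite Fac_int' ?lev_Fac //.
by apply: contraNneq hne => ->.
Qed.

Lemma Dc_mem A : (A \in Dc) = has (fun H : {set 'I_NN} => A \subset H) Lst.
Proof. by rewrite inE. Qed.

Lemma leafy_Fac k : k < size Ls ->
  leafy d (rev (map Fac (iota 0 k.+1))) (rev (take k (behead Ls))).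
Proof.
elim: k => [|k IH] hk.
  by rewrite /= take0; split=> //; apply: Fac_card.
have eI : iota 0 k.+2 = rcons (iota 0 k.+1) k.+1.
  by rewrite -cats1 -[k.+2]addn1 iotaD.
have eT : take k.+1 (behead Ls) = rcons (take k (behead Ls)) (lv k.+1).
  rewrite (take_nth 0) //; last by rewrite size_behead; lia.
  by rewrite nth_behead.
rewrite eI map_rcons rev_rcons eT rev_rcons /=; split; first exact: Fac_card.
have IH' := IH (ltnW hk).
case E: (rev (map Fac (iota 0 k.+1))) IH' => [|H L] IH' //.
exists (lv k.+1), (rev (take k (behead Ls))); split=> //; split=> //.
exists (Pset (lv k.+1)); split.
- by apply/subsetP=> v; rewrite !inE => ->.
- by rewrite card_P //; have := lv_le k.+1; have := d_le_N; lia.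
- rewrite -E; apply/hasP; exists (Fac 0).
    by rewrite mem_rev; apply: map_f; rewrite mem_iota.
  by apply/subsetP=> v; rewrite !inE /lv hLs0 => h; have := lv_le k.+1; rewrite /lv; lia.
- rewrite -E; apply/allP=> H'; rewrite mem_rev => /mapP [j]; rewrite mem_iota => /andP [_ hj] ->.
  rewrite Fac_int; [|by move: hj; rewrite add0n|exact: hk].
  by apply/subsetP=> v; rewrite !inE => h; exact: leq_trans h (geq_minr _ _).
Qed.

Lemma Dc_leafy : leafy d Lst (rev (behead Ls)).
Proof.
have := leafy_Fac (k := (size Ls).-1); rewrite prednK // => /(_ (leqnn _)).
by rewrite take_oversize // size_behead.
Qed.

End Construction.

End Part5.
Import Part5.

Module Part6.
Import Order.TTheory GRing.Theory Num.Theory.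
Set Implicit Arguments. Unset Strict Implicit. Unset Printing Implicit Defensive.
Local Open Scope ring_scope.

Lemma Bm_rev d ms : Bm d (rev ms) = Bm d ms.
Proof. by rewrite /Bm !big_cons big_rev. Qed.

Lemma iv_ii d (f : nat -> int) : (1 <= d)%N ->
   (0 < bb d f 1 /\ forall i, (1 <= i < d)%N -> bb d f i <= bb d f i.+1) ->
   (exists (n : nat) (D : {set {set 'I_n}}),
      simplicial_complex D /\ pure_dim D d /\ forest D /\
      has_fvector D d f).
Proof.
move=> hd [hb1 hbm].
have [ms [ams hc]] := ms_of_b hb1 hbm.
have h0 : nth 0%N (d :: ms) 0 = d by [].
have h1 : all (fun m => m <= d)%N (d :: ms).
  by rewrite /= leqnn /=; apply/allP=> m /(allP ams) /ltnW.
have h2 : (0 < size (d :: ms))%N by [].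
exists (NN d (d :: ms)), (Dc d (d :: ms)).
split; first exact: Dc_simplicial.
split; first exact: Dc_pure.
split; first exact: Dc_forest.
have ams' : all (fun m => m < d)%N (rev ms) by rewrite all_rev.
have hp := pipeline (@Dc_mem d (d :: ms)) (Dc_leafy h0 h1 h2) ams'
   (f := fun i => Posz (fvec (Dc d (d :: ms)) i)) (fun _ _ => erefl).
rewrite Bm_rev in hp.
have hf : bpoly d f = Bm d ms.
  apply/polyP=> t; rewrite coef_Bm.
  case: ifP => ht.
    by have := hc t ht; rewrite /bb /=.
  by rewrite bpoly_coef_high // leqNgt ht.
move=> i hi; rewrite (bpoly_inj (etrans hf (esym hp)) hi).
by [].
Qed.

Lemma ii_i d (f : nat -> int) :
   (exists (n : nat) (D : {set {set 'I_n}}),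
      simplicial_complex D /\ pure_dim D d /\ forest D /\
      has_fvector D d f) ->
   (exists (n : nat) (D : {set {set 'I_n}}),
      simplicial_complex D /\ pure_dim D d /\ quasi_forest D /\
      has_fvector D d f).
Proof.
case=> n [D [hs [hp [hf hv]]]]; exists n, D; do 3?split => //.
exact: forest_qf.
Qed.


End Part6.
Import Part6.

Local Open Scope ring_scope.

Theorem theorem1p2 (d : nat) (f : nat -> int) :
  (1 <= d)%N -> (forall i, (i < d)%N -> 0 < f i) ->
  [<->
   (* (i) *)
   (exists (n : nat) (D : {set {set 'I_n}}),
      simplicial_complex D /\ pure_dim D d /\ quasi_forest D /\
      has_fvector D d f);
   (* (ii) *)
   (exists (n : nat) (D : {set {set 'I_n}}),
      simplicial_complex D /\ pure_dim D d /\ forest D /\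
      has_fvector D d f);
   (* (iii) *)
   ((forall k, (1 <= k <= d)%N -> 0 < \sum_(k <= i < d.+1) cc d f i) /\
    (forall i, (1 <= i < d)%N -> cc d f i <= 0));
   (* (iv) *)
   (0 < bb d f 1 /\ forall i, (1 <= i < d)%N -> bb d f i <= bb d f i.+1)].
Proof.
move=> hd hpos; tfae.
- by move=> h; apply: iv_ii => //; apply: i_iv.
- by move=> h; apply/(iii_iv _ hd); apply: i_iv => //; apply: ii_i.
- by move/(iii_iv _ hd).
- by move=> h; apply: ii_i; apply: iv_ii.
Qed.
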